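(* $(\mathbb{S},\tau^{-1})$ is a final coalgebra for $M\otimes-\colon\mathsf{SquaSet}\to\mathsf{SquaSet}$.
   Context: Let $M_0=\{(r,s)\in[0,1]^2: r\in\{0,1\}\text{ or } s\in\{0,1\}\}$. A square set is a pair $(X,S_X)$ with $X$ a set and $S_X\colon M_0\to X$ injective; $\mathsf{SquaSet}$ has square sets as objects and maps $f$ with $f\circ S_X=S_Y$ as morphisms. Let $N=\{0,1,2\}^2$, $M=N\setminus\{(1,1)\}$, also viewed as points of $\mathbb{R}^2$. For a square set $X$, $M\otimes X=(M\times X)/\!\sim$, where $\sim$ is the equivalence relation generated by $(m,S_X(p))\sim(n,S_X(q))$ whenever $m,n\in M$ differ by exactly $1$ in exactly one coordinate and $(m+p)/3=(n+q)/3$; $m\otimes x$ denotes the class of $(m,x)$; $S_{M\otimes X}(p)=m\otimes S_X(3p-m)$ for any $m\in M$ with $p\in(m+[0,1]^2)/3$; $(M\otimes f)(m\otimes x)=m\otimes f(x)$. The Sierpinski carpet $\mathbb{S}$ is the unique nonempty compact $K\subseteq[0,1]^2$ with $K=\bigcup_{m\in M}\frac13(m+K)$, with $S_{\mathbb{S}}$ the inclusion of $M_0$. $\tau\colon M\otimes\mathbb{S}\to\mathbb{S}$, $\tau(m\otimes s)=\frac13(m+s)$, is a bijection. A coalgebra is $(A,a\colon A\to FA)$; a final coalgebra admits a unique coalgebra morphism $h$ (with $b\circ h=Fh\circ a$) from every coalgebra. *)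

(* Defs.v *)
From HB Require Import structures.
From mathcomp Require Import all_boot all_order all_algebra.
From mathcomp Require Import all_classical all_reals all_analysis.
From mathcomp Require Import Rstruct Rstruct_topology.
From mathcomp Require Import lra.
From Stdlib Require Import ClassicalEpsilon ProofIrrelevance Relations.

Set Implicit Arguments.
Unset Strict Implicit.
Unset Printing Implicit Defensive.
Import Order.TTheory GRing.Theory Num.Theory.

Local Open Scope ring_scope.
Local Open Scope classical_set_scope.

Section Defs.
Variable R : realType.

Definition pt := (R * R)%type.

Definition unitsq : set pt := [set p | (0 <= p.1 <= 1) && (0 <= p.2 <= 1)].
Definition M0 : set pt :=
  [set p | unitsq p /\ (p.1 = 0 \/ p.1 = 1 \/ p.2 = 0 \/ p.2 = 1)].
Definition M0pt := {p : pt | M0 p}.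

Record squaSet := SquaSet {
  sq_car :> Type;
  sq : M0pt -> sq_car;
  sq_inj : injective sq }.

Definition sqmor (X Y : squaSet) (f : X -> Y) : Prop :=
  forall p, f (sq X p) = sq Y p.

Definition Mty := {m : nat * nat | [&& (m.1 < 3)%N, (m.2 < 3)%N & m != (1, 1)%N]}.
Definition mR (m : Mty) : pt := (((val m).1)%:R, ((val m).2)%:R).

Definition adjacent (m n : Mty) : Prop :=
  let a := val m in let b := val n in
  ((a.1.+1 = b.1 \/ b.1.+1 = a.1) /\ a.2 = b.2) \/
  (a.1 = b.1 /\ (a.2.+1 = b.2 \/ b.2.+1 = a.2)).

Definition contract (m : Mty) (p : pt) : pt :=
  (((mR m).1 + p.1) / 3, ((mR m).2 + p.2) / 3).

(* the cell index of p: some m with p \in (m + [0,1]^2)/3 *)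
Definition cidx (r : R) : nat :=
  if r < 1/3 then 0%N else if r < 2/3 then 1%N else 2%N.

Lemma cidx_lt3 r : (cidx r < 3)%N.
Proof. by rewrite /cidx; case: ifP => //; case: ifP. Qed.

Lemma cidx0 : cidx 0 = 0%N.
Proof. by rewrite /cidx ifT //; lra. Qed.

Lemma cidx1 : cidx 1 = 2%N.
Proof. by rewrite /cidx ifF; [rewrite ifF // |]; apply/negbTE; rewrite -leNgt; lra. Qed.

Lemma cidx_bound r : 0 <= r <= 1 ->
  0 <= 3 * r - (cidx r)%:R <= 1.
Proof.
move=> /andP[r0 r1]; rewrite /cidx.
case: ifP => [h|/negbT]; first by apply/andP; split; lra.
rewrite -leNgt => h1; case: ifP => [h|/negbT]; first by apply/andP; split; lra.
by rewrite -leNgt => h2; apply/andP; split; lra.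
Qed.

Lemma cell_ok (p : M0pt) :
  [&& (cidx (proj1_sig p).1 < 3)%N, (cidx (proj1_sig p).2 < 3)%N &
      (cidx (proj1_sig p).1, cidx (proj1_sig p).2) != (1, 1)%N].
Proof.
rewrite !cidx_lt3 /=; case: p => p [_ hb] /=.
by case: hb => [->|[->|[->|->]]]; rewrite ?cidx0 ?cidx1 // xpair_eqE ?andbF.
Qed.

Definition cell (p : M0pt) : Mty :=
  exist (fun m : nat * nat => is_true [&& (m.1 < 3)%N, (m.2 < 3)%N & m != (1, 1)%N])
    (cidx (proj1_sig p).1, cidx (proj1_sig p).2) (cell_ok p).

Definition resc (p : pt) (m : Mty) : pt :=
  (3 * p.1 - (mR m).1, 3 * p.2 - (mR m).2).

Lemma resc_ok (p : M0pt) : M0 (resc (proj1_sig p) (cell p)).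
Proof.
case: p => p hp; have [/andP[h1 h2] hb] := hp; rewrite /M0 /resc /mR /cell /=; split.
  rewrite /unitsq /=.
  by apply/andP; split; apply: cidx_bound.
case: hb => [->|[->|[->|->]]]; rewrite ?cidx0 ?cidx1.
- by left; rewrite mulr0 subr0.
- by right; left; rewrite mulr1; lra.
- by right; right; left; rewrite mulr0 subr0.
- by right; right; right; rewrite mulr1; lra.
Qed.

Section Tensor.
Variable X : squaSet.

Definition gen (a b : Mty * X) : Prop :=
  exists (m n : Mty) (p q : M0pt),
    a = (m, sq X p) /\ b = (n, sq X q) /\ adjacent m n /\
    contract m (proj1_sig p) = contract n (proj1_sig q).

Definition eqv : Mty * X -> Mty * X -> Prop := clos_refl_sym_trans _ gen.

(* M (x) X = (M x X)/~ , as the type of equivalence classes *)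
Definition MX := {P : Mty * X -> Prop | exists a, P = eqv a}.

Definition tens (m : Mty) (x : X) : MX :=
  exist _ (eqv (m, x)) (ex_intro _ (m, x) erefl).

Definition repr (c : MX) : Mty * X :=
  proj1_sig (constructive_indefinite_description _ (proj2_sig c)).

(* S_{M (x) X}(p) = m (x) S_X(3p - m) for (a chosen) m with p in (m+[0,1]^2)/3 *)
Definition sqMX (p : M0pt) : MX :=
  tens (cell p) (sq X (exist _ _ (resc_ok p))).

End Tensor.

Definition Mmap (X Y : squaSet) (f : X -> Y) (c : MX X) : MX Y :=
  tens (repr c).1 (f (repr c).2).

Definition is_final_coalg (Z : squaSet) (z : Z -> MX Z) : Prop :=
  (forall p, z (sq Z p) = sqMX Z p) /\
  forall (A : squaSet) (a : A -> MX A),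
    (forall p, a (sq A p) = sqMX A p) ->
    exists! h : A -> Z, sqmor h /\ forall x, z (h x) = Mmap h (a x).

Definition hutch (K : set pt) : set pt :=
  \bigcup_(m in [set: Mty]) (contract m @` K).

Section Carpet.
Variables (K : set pt) (hM0 : M0 `<=` K).

Definition Kt := {p : pt | K p}.
Definition sqK (p : M0pt) : Kt := exist _ (proj1_sig p) (hM0 (proj2_sig p)).

Lemma sqK_inj : injective sqK.
Proof.
move=> [p hp] [q hq] /(congr1 (@proj1_sig _ _)) /= epq.
by move: hp hq; rewrite epq => hp hq; rewrite (proof_irrelevance _ hp hq).
Qed.

Definition carpetSq : squaSet := SquaSet sqK_inj.

Variable hfix : K = hutch K.

Lemma tau_in (c : MX carpetSq) : K (contract (repr c).1 (proj1_sig (repr c).2)).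
Proof.
have hK := proj2_sig (repr c).2.
have : hutch K (contract (repr c).1 (proj1_sig (repr c).2)).
  by exists (repr c).1 => //; exists (proj1_sig (repr c).2).
by rewrite -hfix.
Qed.

Definition tau (c : MX carpetSq) : carpetSq := exist _ _ (tau_in c).

End Carpet.
End Defs.
Arguments tau {R K} hM0 hfix c.

(* Main.v *)
Require Import Defs.
From mathcomp Require Import all_boot all_classical all_reals all_analysis.
From mathcomp Require Import Rstruct Rstruct_topology.
Local Open Scope classical_set_scope.
From mathcomp Require Import all_order all_algebra lra ring.
From Stdlib Require Import ClassicalEpsilon ProofIrrelevance Relations Lia.
Import Order.TTheory GRing.Theory Num.Theory numFieldNormedType.Exports.
Local Open Scope ring_scope.
Set Implicit Arguments.
Unset Strict Implicit.


Section Ana.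
Variable R : realType.

Definition ip (n : nat) : R := (3 ^+ n)^-1.

Lemma ip0 : ip 0 = 1. Proof. by rewrite /ip expr0 invr1. Qed.
Lemma ipS n : ip n.+1 = ip n / 3.
Proof. by rewrite /ip exprS invfM mulrC. Qed.
Lemma ip_gt0 n : 0 < ip n.
Proof. by rewrite /ip invr_gt0 exprn_gt0. Qed.
Lemma ip_le1 n : ip n <= 1.
Proof. elim: n => [|n IH]; rewrite ?ip0 // ipS; have := ip_gt0 n; lra. Qed.

Lemma zero_small (a B : R) : (forall n, `|a| * 3 ^+ n <= B) -> a = 0.
Proof.
move=> h; have hB : `|a| <= B by have := h 0%N; rewrite expr0 mulr1.
apply/eqP; apply: contraT => a0.
have ha : 0 < `|a| by rewrite normr_gt0.
have hq : 0 <= B / `|a| by rewrite divr_ge0 // (le_trans _ hB).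
have := archi_boundP hq; set n := Num.Def.archi_bound _ => hn.
have h3 : (n%:R : R) <= 3 ^+ n.
  rewrite -natrX ler_nat; apply: ltnW; exact: ltn_expl.
have := h n.
have : B < `|a| * 3 ^+ n.
  rewrite mulrC -ltr_pdivrMr //; exact: (lt_le_trans hn h3).
move=> h1 h2; have := lt_le_trans h1 h2; by rewrite ltxx.
Qed.

Lemma zero_ip (a : R) : (forall n, `|a| <= ip n) -> a = 0.
Proof.
move=> h; apply: (@zero_small a 1) => n.
by rewrite -ler_pdivlMr ?exprn_gt0 // mul1r; exact: h.
Qed.

Lemma contr_zero (T : Type) (f : T -> R) (B : R) :
  (forall t, 0 <= f t) -> (forall t, f t <= B) ->
  (forall t, exists t', 3 * f t <= f t') -> forall t, f t = 0.
Proof.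
move=> h0 hB hc.
have key : forall n t, f t * 3 ^+ n <= B.
  elim=> [|n IH] t; first by rewrite expr0 mulr1.
  have [t' ht'] := hc t; rewrite exprS mulrA (mulrC (f t)).
  apply: le_trans (IH t'); rewrite ler_wpM2r // exprn_ge0 //.
move=> t; apply: (@zero_small (f t) B) => n.
by rewrite ger0_norm.
Qed.

Lemma exists_ip (e : R) : 0 < e -> exists n, ip n < e.
Proof.
move=> e0; have hq : 0 <= e^-1 by rewrite invr_ge0 ltW.
have := archi_boundP hq; set n := Num.Def.archi_bound _ => hn.
exists n.
have h3 : (n%:R : R) <= 3 ^+ n.
  rewrite -natrX ler_nat; apply: ltnW; exact: ltn_expl.
rewrite /ip -(invrK e) ltf_pV2 ?posrE ?exprn_gt0 ?invr_gt0 //.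
exact: lt_le_trans hn h3.
Qed.

Section Digits.
Variables (T : Type) (d : T -> nat) (nx : T -> T).
Hypothesis hd : forall x, (d x <= 2)%N.

Fixpoint S n x : R := if n is n'.+1 then ((d x)%:R + S n' (nx x)) / 3 else 0.

Lemma dR x : 0 <= ((d x)%:R : R) <= 2.
Proof. by rewrite ler0n /= -[2]/(2%:R : R) ler_nat. Qed.

Lemma S_ge0 n x : 0 <= S n x.
Proof. elim: n x => [|n IH] x //=; have := IH (nx x); have := dR x; lra. Qed.
Lemma S_le1 n x : S n x <= 1.
Proof. elim: n x => [|n IH] x //=; have := IH (nx x); have := dR x; lra. Qed.

Lemma S_mono n k x : S n x <= S (n + k) x.
Proof.
elim: n x => [|n IH] x; first exact: S_ge0.
rewrite addSn /=; have := IH (nx x); lra.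
Qed.

Lemma S_tail n k x : S (n + k) x <= S n x + ip n.
Proof.
elim: n x => [|n IH] x; first by rewrite add0n ip0 /=; have := S_le1 k x; lra.
rewrite addSn /= ipS; have := IH (nx x); lra.
Qed.

Definition H x : R := sup (range (fun n => S n x)).

Lemma H_lb n x : S n x <= H x.
Proof.
apply: ub_le_sup; last by exists n.
by exists 1 => _ [k _ <-]; exact: S_le1.
Qed.

Lemma H_ub n x : H x <= S n x + ip n.
Proof.
apply: ge_sup; first by exists (S 0 x), 0%N.
move=> _ [k _ <-]; case: (leqP k n) => hk.
  have := S_mono k (n - k) x; rewrite subnKC // => h.
  have := ip_gt0 n; lra.
have := S_tail n (k - n) x; rewrite subnKC // ltnW //.
Qed.

Lemma H_01 x : 0 <= H x <= 1.
Proof. have := H_lb 0 x; have := H_ub 0 x; rewrite ip0 /=; lra. Qed.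

Lemma H_eq x : H x = ((d x)%:R + H (nx x)) / 3.
Proof.
apply/eqP; rewrite -subr_eq0; apply/eqP; apply: zero_ip => n.
have := H_lb n.+1 x; have := H_ub n.+1 x.
have := H_lb n (nx x); have := H_ub n (nx x).
rewrite /= ipS; have := ip_gt0 n => h0 h1 h2 h3 h4.
rewrite ler_norml; apply/andP; split; lra.
Qed.

End Digits.

Lemma prod_hausdorff : hausdorff_space (R * R)%type.
Proof.
rewrite ball_hausdorff => a b ab.
have [e [e0 he]] : exists e : R, 0 < e /\
   forall z : R * R, ~ (`|a.1 - z.1| < e /\ `|b.1 - z.1| < e /\
                         `|a.2 - z.2| < e /\ `|b.2 - z.2| < e).
  case: (eqVneq a.1 b.1) => h1.
    have h2 : a.2 != b.2.
      apply: contra ab => /eqP h2; apply/eqP.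
      by move: h1 h2; case: a => ? ?; case: b => ? ? /= -> ->.
    exists (`|a.2 - b.2| / 2); split; first by rewrite divr_gt0 // normr_gt0 subr_eq0.
    move=> z [_ [_ [z1 z2]]].
    rewrite distrC in z2.
    have : `|a.2 - z.2| + `|z.2 - b.2| < `|a.2 - b.2| by lra.
    move=> h; have := le_lt_trans (ler_distD z.2 a.2 b.2) h; rewrite ltxx //.
  exists (`|a.1 - b.1| / 2); split; first by rewrite divr_gt0 // normr_gt0 subr_eq0.
  move=> z [z1 [z2 _]]; rewrite distrC in z2.
  have : `|a.1 - z.1| + `|z.1 - b.1| < `|a.1 - b.1| by lra.
  move=> h; have := le_lt_trans (ler_distD z.1 a.1 b.1) h; rewrite ltxx //.
exists (PosNum e0, PosNum e0); apply/eqP; rewrite -subset0 => z [za zb].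
apply: (he z); move: za zb; rewrite /ball /= /prod_ball /=.
by rewrite -!ball_normE /= => -[? ?] [? ?].
Qed.

End Ana.


Section Eqv.
Variable R : realType.

Lemma coordL (a b : nat) (x y : R) : (a < 3)%N -> (b < 3)%N ->
  0 <= x <= 1 -> 0 <= y <= 1 -> a%:R + x = b%:R + y ->
  (a = b /\ x = y) \/ (a.+1 = b /\ x = 1 /\ y = 0) \/ (b.+1 = a /\ x = 0 /\ y = 1).
Proof.
move=> ha hb /andP[x0 x1] /andP[y0 y1] e.
case: a ha e => [|[|[|a]]] // _; case: b hb => [|[|[|b]]] // _; rewrite ?mulr0n ?mulr1n => e.
all: first [ left; split; [reflexivity | lra] | right; left; split; [reflexivity | split; lra] | right; right; split; [reflexivity | split; lra] | exfalso; lra ].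
Qed.

Section G.
Variable X : squaSet R.

Lemma eqv_good (p0 : pt R) a b : eqv a b ->
  (exists q, a.2 = sq X q /\ Defs.contract a.1 (proj1_sig q) = p0) <->
  (exists q, b.2 = sq X q /\ Defs.contract b.1 (proj1_sig q) = p0).
Proof.
elim=> {a b} [a b [m [n [p [q [-> [-> [_ e]]]]]]]|a|a b _ [h1 h2]|a b c _ [h1 h2] _ [h3 h4]].
- split=> -[q' [/= /sq_inj <- <-]]; [exists q | exists p]; split => //.
- by [].
- by split.
- by split => ?; [apply: h3; apply: h1|apply: h2; apply: h4].
Qed.

Lemma tens_repr (c : MX X) : c = tens (Defs.repr c).1 (Defs.repr c).2.
Proof.
case: c => P h; rewrite /Defs.repr /=.
case: constructive_indefinite_description => -[m x] /= e.
apply: eq_sig_hprop => [? ? ?|]; first exact: proof_irrelevance.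
by [].
Qed.

Lemma eqv_repr_tens m (x : X) : eqv (m, x) (Defs.repr (tens m x)).
Proof.
rewrite /Defs.repr /=; case: constructive_indefinite_description => r /= e.
by rewrite e; apply: rst_refl.
Qed.

Lemma tens_eq m (x : X) n (y : X) : eqv (m, x) (n, y) -> tens m x = tens n y.
Proof.
move=> h; apply: eq_sig_hprop => [? ? ?|]; first exact: proof_irrelevance.
rewrite /=; apply: boolp.funext => z; apply: boolp.propext; split => hz.
  apply: rst_trans hz; exact: rst_sym.
exact: rst_trans h hz.
Qed.

End G.
End Eqv.


Section Carp.
Variable R : realType.
Variables (K : set (pt R)) (hM0 : (@M0 R) `<=` K) (Ksub : K `<=` (@unitsq R)).
Let X := carpetSq hM0.

Lemma eqv_contract (a b : Mty * X) : eqv a b ->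
  Defs.contract a.1 (proj1_sig a.2) = Defs.contract b.1 (proj1_sig b.2).
Proof.
elim=> {a b} [a b [m [n [p [q [-> [-> [_ e]]]]]]]|a|a b _ h|a b c _ h1 _ h2] //=.
by rewrite h1.
Qed.

Lemma toM0 (s : Kt K) (h : (@M0 R) (proj1_sig s)) : s = sq X (exist _ (proj1_sig s) h).
Proof.
apply: eq_sig_hprop => [? ? ?|]; first exact: proof_irrelevance.
by [].
Qed.

Lemma gen_step m n (p q : M0pt R) : Defs.adjacent m n ->
  Defs.contract m (proj1_sig p) = Defs.contract n (proj1_sig q) ->
  eqv (m, sq X p) (n, sq X q).
Proof.
move=> hadj e; apply: rst_step; exists m, n, p, q; by [].
Qed.

Lemma M0_1 (x y : R) : (x = 0 \/ x = 1) -> 0 <= y <= 1 -> (@M0 R) (x, y).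
Proof.
move=> hx hy; split; last by case: hx => ->; [left|right;left].
rewrite /unitsq /= hy andbT; case: hx => ->; apply/andP; split; lra.
Qed.

Lemma M0_2 (x y : R) : (y = 0 \/ y = 1) -> 0 <= x <= 1 -> (@M0 R) (x, y).
Proof.
move=> hy hx; split; last by case: hy => ->; [right;right;left|right;right;right].
rewrite /unitsq /= hx /=; case: hy => ->; apply/andP; split; lra.
Qed.

Lemma bit01 (x : R) : (x = 0 \/ x = 1) -> 0 <= x <= 1.
Proof. by case=> ->; apply/andP; split; lra. Qed.

Lemma diag (m1 m2 n1 n2 : nat) hm hn (s1 s2 t1 t2 : R) hs ht :
  (m1.+1 = n1 \/ n1.+1 = m1) -> (m2.+1 = n2 \/ n2.+1 = m2) ->
  (s1 = 0 \/ s1 = 1) -> (s2 = 0 \/ s2 = 1) -> (t1 = 0 \/ t1 = 1) -> (t2 = 0 \/ t2 = 1) ->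
  (m1%:R + s1) / 3 = (n1%:R + t1) / 3 -> (m2%:R + s2) / 3 = (n2%:R + t2) / 3 ->
  eqv (X:=X) (exist _ (m1, m2) hm, exist _ (s1, s2) hs)
             (exist _ (n1, n2) hn, exist _ (t1, t2) ht).
Proof.
move=> a1 a2 bs1 bs2 bt1 bt2 E1 E2.
have hMs : (@M0 R) (s1, s2) by apply: M0_1 => //; exact: bit01.
have hMt : (@M0 R) (t1, t2) by apply: M0_1 => //; exact: bit01.
rewrite (toM0 (s:=exist _ (s1, s2) hs) hMs) (toM0 (s:=exist _ (t1, t2) ht) hMt) /=.
have /and3P[m1l m2l _] := hm; have /and3P[n1l n2l _] := hn.
case: (eqVneq (m1, n2) (1, 1)%N) => hc.
- move: hc => /eqP; rewrite xpair_eqE => /andP[/eqP em /eqP en].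
  have hc' : [&& (n1 < 3)%N, (m2 < 3)%N & (n1, m2) != (1, 1)%N].
    rewrite n1l m2l /= xpair_eqE negb_and; apply/orP; left; apply/eqP; lia.
  have hMu : (@M0 R) (t1, s2) by apply: M0_1 => //; exact: bit01.
  apply: (rst_trans _ _ _ (exist _ (n1, m2) hc', sq X (exist _ (t1, s2) hMu))).
    apply: gen_step; first by rewrite /Defs.adjacent /=; lia.
    by rewrite /Defs.contract /mR /= E1.
  apply: gen_step; first by rewrite /Defs.adjacent /=; lia.
  by rewrite /Defs.contract /mR /= E2.
- have hc' : [&& (m1 < 3)%N, (n2 < 3)%N & (m1, n2) != (1, 1)%N] by rewrite m1l n2l hc.
  have hMu : (@M0 R) (s1, t2) by apply: M0_1 => //; exact: bit01.
  apply: (rst_trans _ _ _ (exist _ (m1, n2) hc', sq X (exist _ (s1, t2) hMu))).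
    apply: gen_step; first by rewrite /Defs.adjacent /=; lia.
    by rewrite /Defs.contract /mR /= E2.
  apply: gen_step; first by rewrite /Defs.adjacent /=; lia.
  by rewrite /Defs.contract /mR /= E1.
Qed.

End Carp.


Ltac adjt := rewrite /Defs.adjacent /=; first [ by left; split; [left|] | by left; split; [right|] | by right; split; [|left] | by right; split; [|right] ].
Ltac m0t := first [ apply: M0_1; [first [by left|by right] | done] | apply: M0_2; [first [by left|by right] | done] ].
Section Carp2.
Variable R : realType.
Variables (K : set (pt R)) (hM0 : (@M0 R) `<=` K) (Ksub : K `<=` (@unitsq R)).
Let X := carpetSq hM0.

Lemma adj_case (m1 m2 n1 n2 : nat) hm hn (s1 s2 t1 t2 : R) hs ht :
  Defs.adjacent (exist _ (m1, m2) hm) (exist _ (n1, n2) hn) ->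
  (@M0 R) (s1, s2) -> (@M0 R) (t1, t2) ->
  (m1%:R + s1) / 3 = (n1%:R + t1) / 3 -> (m2%:R + s2) / 3 = (n2%:R + t2) / 3 ->
  eqv (X:=X) (exist _ (m1, m2) hm, exist _ (s1, s2) hs)
             (exist _ (n1, n2) hn, exist _ (t1, t2) ht).
Proof.
move=> ad hMs hMt E1 E2.
rewrite (@toM0 R K hM0 (exist _ (s1, s2) hs) hMs) (@toM0 R K hM0 (exist _ (t1, t2) ht) hMt) /=.
apply: gen_step => //.
by rewrite /Defs.contract /mR /= E1 E2.
Qed.

Lemma contract_eqv m n (s t : X) :
  Defs.contract m (proj1_sig s) = Defs.contract n (proj1_sig t) -> eqv (m, s) (n, t).
Proof.
case: m => [[m1 m2] hm]; case: n => [[n1 n2] hn].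
case: s => [[s1 s2] hs]; case: t => [[t1 t2] ht].
rewrite /Defs.contract /mR /= => -[E1 E2].
have := Ksub hs; have := Ksub ht; rewrite /unitsq /= => /andP[ht1 ht2] /andP[hs1 hs2].
have /and3P[/= m1l m2l _] := hm; have /and3P[/= n1l n2l _] := hn.
have C1 := @coordL R _ _ _ _ m1l n1l hs1 ht1 (ltac:(lra)).
have C2 := @coordL R _ _ _ _ m2l n2l hs2 ht2 (ltac:(lra)).
case: C1 => [[e1 f1]|[[e1 [f1 g1]]|[e1 [f1 g1]]]];
case: C2 => [[e2 f2]|[[e2 [f2 g2]]|[e2 [f2 g2]]]].
all: try (subst; rewrite (bool_irrelevance hm hn) (proof_irrelevance _ hs ht); exact: rst_refl).
all: try (apply: diag; [ first [done | by left | by right] .. ]).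
all: apply: adj_case; [adjt | m0t | m0t | done | done].
Qed.
End Carp2.


Section Top.
Variable R : realType.

Lemma closed_approx (K : set (pt R)) (Kc : compact K) (q : pt R) :
  (forall n, exists k, K k /\ `|q.1 - k.1| <= ip R n /\ `|q.2 - k.2| <= ip R n) -> K q.
Proof.
move=> hq; have cl : closed K := compact_closed (@prod_hausdorff R) Kc.
apply: cl => B /nbhs_ballP [e e0 hB].
have [n hn] := @exists_ip R e e0.
have [k [hk [h1 h2]]] := hq n.
exists k; split => //; apply: hB.
rewrite /ball /= /prod_ball /= -!ball_normE /=; split; exact: le_lt_trans hn.
Qed.

Lemma contract_cell (p : M0pt R) :
  Defs.contract (cell p) (resc (proj1_sig p) (cell p)) = proj1_sig p.
Proof.
case: p => [[p1 p2] hp]; rewrite /Defs.contract /resc /=.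
congr pair; lra.
Qed.

Lemma contract_dist1 m (x y : pt R) :
  `|(Defs.contract m x).1 - (Defs.contract m y).1| = `|x.1 - y.1| / 3.
Proof.
rewrite /Defs.contract /=.
have -> : ((mR R m).1 + x.1) / 3 - ((mR R m).1 + y.1) / 3 = (x.1 - y.1) / 3 by ring.
by rewrite normrM (ger0_norm (x := 3^-1)) // invr_ge0 ler0n.
Qed.

Lemma contract_dist2 m (x y : pt R) :
  `|(Defs.contract m x).2 - (Defs.contract m y).2| = `|x.2 - y.2| / 3.
Proof.
rewrite /Defs.contract /=.
have -> : ((mR R m).2 + x.2) / 3 - ((mR R m).2 + y.2) / 3 = (x.2 - y.2) / 3 by ring.
by rewrite normrM (ger0_norm (x := 3^-1)) // invr_ge0 ler0n.
Qed.

Lemma pt_eq0 (x y : pt R) : `|x.1 - y.1| + `|x.2 - y.2| = 0 -> x = y.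
Proof.
case: x => x1 x2; case: y => y1 y2 /= h.
have n1 := normr_ge0 (x1 - y1); have n2 := normr_ge0 (x2 - y2).
have h1 : `|x1 - y1| = 0 by lra.
have h2 : `|x2 - y2| = 0 by lra.
move/eqP: h1; rewrite normr_eq0 subr_eq0 => /eqP ->.
by move/eqP: h2; rewrite normr_eq0 subr_eq0 => /eqP ->.
Qed.

Lemma unit_dist (x y : R) : 0 <= x <= 1 -> 0 <= y <= 1 -> `|x - y| <= 1.
Proof. move=> /andP[? ?] /andP[? ?]; rewrite ler_norml; apply/andP; split; lra. Qed.

Lemma M0_sub (K : set (pt R)) (Kne : K !=set0) (Kc : compact K)
  (Ksub : K `<=` (@unitsq R)) (Kfix : K = hutch K) : (@M0 R) `<=` K.
Proof.
have key : forall n (q : M0pt R), exists k, K k /\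
    `|(proj1_sig q).1 - k.1| <= ip R n /\ `|(proj1_sig q).2 - k.2| <= ip R n.
  elim=> [|n IH] q.
    have [k0 hk0] := Kne; exists k0; split => //.
    have := Ksub _ hk0; case: q => [q [hq _]] /=; rewrite ip0.
    move: hq; rewrite /unitsq /= => /andP[? ?] /andP[? ?].
    by split; apply: unit_dist.
  have [k' [hk' [h1 h2]]] := IH (exist _ _ (resc_ok q)).
  exists (Defs.contract (cell q) k'); split.
    by rewrite Kfix; exists (cell q) => //; exists k'.
  rewrite -{1 2}(contract_cell q) contract_dist1 contract_dist2 ipS.
  split; rewrite ler_pdivrMr // ?divfK //; rewrite -ler_pdivlMr // mulrC mulKf //.
by move=> q hq; apply: (@closed_approx K Kc) => n; exact: (key n (exist _ q hq)).
Qed.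

End Top.


Section Tau.
Variable R : realType.
Variables (K : set (pt R)) (hM0 : (@M0 R) `<=` K) (Ksub : K `<=` (@unitsq R))
  (Kfix : K = hutch K).
Let X := carpetSq hM0.

Lemma tau_tens m (s : X) :
  proj1_sig (tau hM0 Kfix (tens m s)) = Defs.contract m (proj1_sig s).
Proof.
rewrite /tau /=; symmetry.
have := @eqv_contract R K hM0 (m, s) _ (@eqv_repr_tens R (carpetSq hM0) m s). by [].
Qed.

Lemma tau_inj : injective (tau hM0 Kfix).
Proof.
move=> c1 c2 e.
rewrite {1}(tens_repr c1) {1}(tens_repr c2); apply: tens_eq.
apply: (contract_eqv Ksub).
by have := congr1 (@proj1_sig _ _) e.
Qed.

Lemma tau_surj (s : X) : exists c, tau hM0 Kfix c = s.
Proof.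
case: s => p hp; have := hp; rewrite {1}Kfix => -[m _ [k hk ek]].
exists (tens m (exist _ k hk : X)).
apply: eq_sig_hprop => [? ? ?|]; first exact: proof_irrelevance.
by rewrite tau_tens.
Qed.

Lemma tau_bij : bijective (tau hM0 Kfix).
Proof.
pose g s := proj1_sig (constructive_indefinite_description _ (tau_surj s)).
exists g => [c|s]; last by rewrite /g; case: constructive_indefinite_description.
apply: tau_inj; rewrite /g; by case: constructive_indefinite_description.
Qed.

Lemma sq_tau p : sq X p = tau hM0 Kfix (sqMX X p).
Proof.
apply: eq_sig_hprop => [? ? ?|]; first exact: proof_irrelevance.
by rewrite /sqMX tau_tens /= contract_cell.
Qed.

End Tau.


Section Coalg.
Variable R : realType.
Variables (K : set (pt R)) (Kne : K !=set0) (Kc : compact K)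
  (hM0 : (@M0 R) `<=` K) (Ksub : K `<=` (@unitsq R)) (Kfix : K = hutch K).
Let X := carpetSq hM0.
Variables (tinv : X -> MX X) (htc : cancel (tau hM0 Kfix) tinv)
  (hct : cancel tinv (tau hM0 Kfix)).
Variables (A : squaSet R) (a : A -> MX A) (ha : forall p, a (sq A p) = sqMX A p).

Let stp x := Defs.repr (a x).
Let dg1 x := (proj1_sig (stp x).1).1.
Let dg2 x := (proj1_sig (stp x).1).2.
Let nx x := (stp x).2.

Lemma dg_le (m : Mty) : ((proj1_sig m).1 <= 2)%N /\ ((proj1_sig m).2 <= 2)%N.
Proof. by case: m => [[i j]] /= /and3P[hi hj _]. Qed.

Let hd1 x : (dg1 x <= 2)%N. Proof. exact: (dg_le _).1. Qed.
Let hd2 x : (dg2 x <= 2)%N. Proof. exact: (dg_le _).2. Qed.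

Let hpt x : pt R := (H R dg1 nx x, H R dg2 nx x).

Lemma hpt_eq x : hpt x = Defs.contract (stp x).1 (hpt (nx x)).
Proof.
by rewrite {1}/hpt (@H_eq R _ dg1 nx hd1 x) (@H_eq R _ dg2 nx hd2 x).
Qed.

Lemma hpt_01 x : 0 <= (hpt x).1 <= 1 /\ 0 <= (hpt x).2 <= 1.
Proof. split; [exact: (@H_01 R _ dg1 nx hd1 x) | exact: (@H_01 R _ dg2 nx hd2 x)]. Qed.

Lemma hpt_K x : K (hpt x).
Proof.
have key : forall n x, exists k, K k /\
    `|(hpt x).1 - k.1| <= ip R n /\ `|(hpt x).2 - k.2| <= ip R n.
  elim=> [|n IH] y.
    have [k0 hk0] := Kne; exists k0; split => //.
    have := Ksub hk0; have [h1 h2] := hpt_01 y; rewrite /unitsq ip0 => /andP[? ?].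
    by split; apply: unit_dist.
  have [k' [hk' [h1 h2]]] := IH (nx y).
  exists (Defs.contract (stp y).1 k'); split.
    by rewrite Kfix; exists (stp y).1 => //; exists k'.
  rewrite hpt_eq contract_dist1 contract_dist2 ipS.
  split; rewrite ler_pdivrMr // ?divfK //; rewrite -ler_pdivlMr // mulrC mulKf //.
by apply: (@closed_approx R K Kc) => n; exact: key.
Qed.

Definition hmor x : X := exist _ (hpt x) (hpt_K x).

Lemma h_coal x : tinv (hmor x) = Mmap hmor (a x).
Proof.
rewrite /Mmap.
have -> : hmor x = tau hM0 Kfix (tens (Defs.repr (a x)).1 (hmor (Defs.repr (a x)).2)).
  apply: eq_sig_hprop => [? ? ?|]; first exact: proof_irrelevance.
  by rewrite tau_tens /= hpt_eq.
by rewrite htc.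
Qed.

Lemma h_sq : sqmor hmor.
Proof.
suff hv : forall p, hpt (sq A p) = proj1_sig p.
  move=> p; apply: eq_sig_hprop => [? ? ?|]; first exact: proof_irrelevance.
  exact: hv.
move=> p0; apply: pt_eq0; move: p0.
apply: (@contr_zero R _ (fun p => `|(hpt (sq A p)).1 - (proj1_sig p).1| +
                                  `|(hpt (sq A p)).2 - (proj1_sig p).2|) 2).
- by move=> p; rewrite addr_ge0.
- move=> p; have [h1 h2] := hpt_01 (sq A p).
  have := proj2_sig p => -[hp _]; move: hp; rewrite /unitsq /= => /andP[u v].
  have := unit_dist h1 u; have := unit_dist h2 v; lra.
- move=> p.
  have e := eqv_repr_tens (cell p) (sq A (exist _ _ (resc_ok p))).
  have [q' [e1 e2]] : exists q', (stp (sq A p)).2 = sq A q' /\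
      Defs.contract (stp (sq A p)).1 (proj1_sig q') = proj1_sig p.
    rewrite /stp ha /sqMX.
    apply: (proj1 (eqv_good (proj1_sig p) e)).
    by exists (exist _ _ (resc_ok p)); split => //=; rewrite contract_cell.
  exists q'.
  rewrite [hpt (sq A p)]hpt_eq -{1 2}e2 /nx e1 !contract_dist1 !contract_dist2.
  lra.
Qed.

Lemma h_uniq (h' : A -> X) : sqmor h' /\ (forall x, tinv (h' x) = Mmap h' (a x)) ->
  h' = hmor.
Proof.
move=> [_ hh]; apply: boolp.funext => x0.
apply: eq_sig_hprop => [? ? ?|]; first exact: proof_irrelevance.
apply: pt_eq0; move: x0.
apply: (@contr_zero R _ (fun x => `|(proj1_sig (h' x)).1 - (hpt x).1| +
                                  `|(proj1_sig (h' x)).2 - (hpt x).2|) 2).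
- by move=> x; rewrite addr_ge0.
- move=> x; have [h1 h2] := hpt_01 x.
  have := Ksub (proj2_sig (h' x)); rewrite /unitsq => /andP[u v].
  have := unit_dist u h1; have := unit_dist v h2; lra.
- move=> x; exists (nx x).
  have ev : proj1_sig (h' x) = Defs.contract (stp x).1 (proj1_sig (h' (nx x))).
    by rewrite -(hct (h' x)) hh /Mmap tau_tens.
  rewrite ev [hpt x]hpt_eq !contract_dist1 !contract_dist2; lra.
Qed.

End Coalg.

Local Close Scope ring_scope.

Theorem mainTheorem5 (K : set (pt Rdefinitions.R))
  (Kne : K !=set0) (Kc : compact K) (Ksub : K `<=` @unitsq Rdefinitions.R)
  (Kfix : K = hutch K) :
  (@M0 Rdefinitions.R `<=` K) /\
  forall hM0 : @M0 Rdefinitions.R `<=` K,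
    bijective (tau hM0 Kfix) /\
    forall tinv : carpetSq hM0 -> MX (carpetSq hM0),
      cancel (tau hM0 Kfix) tinv -> cancel tinv (tau hM0 Kfix) ->
      is_final_coalg tinv.
Proof.
split; first exact: (M0_sub Kne Kc Ksub Kfix).
move=> hM0; split; first exact: (tau_bij hM0 Ksub Kfix).
move=> tinv htc hct; split.
  by move=> p; rewrite (sq_tau hM0 Kfix) htc.
move=> A a ha.
exists (hmor Kne Kc hM0 Ksub Kfix a); split.
  split; [exact: (h_sq Kne Kc hM0 Ksub Kfix ha) | exact: (h_coal Kne Kc Ksub htc)].
by move=> h' hh'; symmetry; exact: (h_uniq Kne Kc Ksub hct hh').
Qed.
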